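(* Let $q\in K_q$ be nonzero and not a root of unity. In the free algebra $K_q\langle f_I\mid I\in[n]^d\rangle$, let $\mathfrak a$ be the two-sided ideal generated by the alternating relations $(\mathcal A_I)$ together with the Young symmetry relations $(\mathcal Y_{I,J})_{(r)}$ for all $1\le r\le d$, and let $\mathfrak a_1$ be the two-sided ideal generated by the alternating relations $(\mathcal A_I)$ together with only the Young symmetry relations with $r=1$. Then $\mathfrak a=\mathfrak a_1$; that is, in the definition of the quantum Grassmannian coordinate ring $\mathcal G_q(d,n)$ one may take only the Young symmetry relations with $r=1$.
   Context: $K_q$ is a field of characteristic $0$ with a distinguished element $q\neq 0$. $[n]=\{1,\dots,n\}$, $d<n$, and $[n]^d$ is the set of $d$-tuples of elements of $[n]$. For a tuple of distinct integers, $\ell(\cdot)$ denotes its number of inversions; for tuples $A,B$, $A|B$ is their concatenation. Alternating relations $(\mathcal A_I)$: for $I\in[n]^d$ with distinct entries, $f_I=(-q)^{-\ell(I)}f_{\sigma(I)}$ where $\sigma(I)$ is the increasing rearrangement of $I$; and $f_I=0$ if two entries of $I$ coincide. Young symmetry relations $(\mathcal Y_{I,J})_{(r)}$: for $1\le r\le d$, $I$ an increasing $(d+r)$-subset of $[n]$ and $J$ a $(d-r)$-subset of $[n]$ (as a tuple), $0=\sum_{\Lambda\subseteq I,\,|\Lambda|=r}(-q)^{-\ell(I\setminus\Lambda|\Lambda)}f_{I\setminus\Lambda}f_{\Lambda|J}$, where subsets of $I$ are listed in increasing order. $\mathcal G_q(d,n)$ is the quotient of $K_q\langle f_I\mid I\in[n]^d\rangle$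 by the ideal generated by all $(\mathcal A_I)$ and $(\mathcal Y_{I,J})_{(r)}$. *)

(* Defs.v *)
From HB Require Import structures.
From mathcomp Require Import all_boot all_order all_algebra.
Set Implicit Arguments. Unset Strict Implicit. Unset Printing Implicit Defensive.
Import Order.TTheory GRing.Theory Num.Theory.
Local Open Scope ring_scope.

(* An element is represented by a finite formal linear combination of words
   (a list of (coefficient, word) pairs); two representations denote the same
   element of K<X> iff they have the same coefficient on every word. *)
Section FreeAlg.
Variables (K : fieldType) (X : eqType).

Definition ncpoly := seq (K * seq X).

Definition ncoef (p : ncpoly) (w : seq X) : K :=
  \sum_(t <- p | t.2 == w) t.1.

Definition ncequiv (p p' : ncpoly) : Prop := forall w, ncoef p w = ncoef p' w.

Definition ncadd (p p' : ncpoly) : ncpoly := p ++ p'.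
Definition ncscale (c : K) (p : ncpoly) : ncpoly := [seq (c * t.1, t.2) | t <- p].
Definition ncsub (p p' : ncpoly) : ncpoly := ncadd p (ncscale (-1) p').
Definition ncmul (p p' : ncpoly) : ncpoly :=
  [seq (a.1 * b.1, a.2 ++ b.2) | a <- p, b <- p'].
Definition ncsum (ps : seq ncpoly) : ncpoly := flatten ps.
Definition ncgen (x : X) : ncpoly := [:: (1, [:: x])].

Definition inIdeal (S : ncpoly -> Prop) (p : ncpoly) : Prop :=
  exists l : seq (ncpoly * ncpoly * ncpoly),
    (forall t, t \in l -> S t.1.2) /\
    ncequiv p (ncsum [seq ncmul (ncmul t.1.1 t.1.2) t.2 | t <- l]).
End FreeAlg.

(* [n] is modelled by 'I_n (0-based, with its natural order); generators f_I,
   I in [n]^d, are indexed by d.-tuple 'I_n. *)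
Section Relations.
Variables (K : fieldType) (q : K) (n d : nat).

Definition gens := d.-tuple 'I_n.

Fixpoint ninv (s : seq 'I_n) : nat :=
  match s with
  | [::] => 0%N
  | x :: s' => (count (fun y : 'I_n => (y < x)%N) s' + ninv s')%N
  end.

(* f_s for a sequence s of length d (zero otherwise; only used at length d) *)
Definition fgen (s : seq 'I_n) : ncpoly K gens :=
  match (insub s : option gens) with
  | Some t => ncgen K t
  | None => [::]
  end.

Definition mqinv (l : nat) : K := ((- q) ^+ l)^-1.

Definition arel (I : gens) : ncpoly K gens :=
  if uniq I then
    ncsub (fgen I) (ncscale (mqinv (ninv I)) (fgen (sort (fun a b : 'I_n => (a <= b)%N) I)))
  else fgen I.

(* Subsets Lambda of I of size r are given by masks m with r true entries;
   I \ Lambda = mask (~m) I and Lambda = mask m I, both in increasing order. *)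
Definition yrel (r : nat) (I J : seq 'I_n) : ncpoly K gens :=
  ncsum [seq ncscale (mqinv (ninv (mask (map negb m) I ++ mask m I)))
                     (ncmul (fgen (mask (map negb m) I)) (fgen (mask m I ++ J)))
        | m <- [seq val m | m <- enum [pred m : (d + r).-tuple bool | count id m == r]]].

Definition yrel_ok (r : nat) (I J : seq 'I_n) : Prop :=
  [/\ (1 <= r <= d)%N, size I = (d + r)%N, sorted (fun a b : 'I_n => (a < b)%N) I,
      size J = (d - r)%N & uniq J].

Definition rels_all (p : ncpoly K gens) : Prop :=
  (exists I, p = arel I) \/ (exists r I J, yrel_ok r I J /\ p = yrel r I J).

Definition rels_one (p : ncpoly K gens) : Prop :=
  (exists I, p = arel I) \/ (exists I J, yrel_ok 1 I J /\ p = yrel 1 I J).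
End Relations.

(* Main.v *)
Require Import Defs.
From HB Require Import structures.
From mathcomp Require Import all_boot all_order all_algebra.
From mathcomp Require Import zify.
Set Implicit Arguments. Unset Strict Implicit. Unset Printing Implicit Defensive.
Import GRing.Theory.
Section Comb.
Variable n : nat.
Implicit Types (s t : seq 'I_n) (A : {set 'I_n}).

Definition ltI := fun a b : 'I_n => (a < b)%N.
Definition cross s t : nat := \sum_(b <- t) count (fun a : 'I_n => (b < a)%N) s.

Lemma ltI_trans : transitive ltI. Proof. by move=> a b c; apply: ltn_trans. Qed.
Lemma ltI_irr : irreflexive ltI. Proof. by move=> a; apply: ltnn. Qed.

Lemma cross_nil t : cross [::] t = 0%N.
Proof. by rewrite /cross big1. Qed.

Lemma cross_consl x s t : cross (x :: s) t = (count (fun b : 'I_n => (b < x)%N) t + cross s t)%N.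
Proof.
rewrite /cross /= big_split /=; congr (_ + _)%N.
by elim: t => [|b t IH]; rewrite ?big_nil ?big_cons //= IH.
Qed.

Lemma cross_consr x s t : cross s (x :: t) = (count (fun a : 'I_n => (x < a)%N) s + cross s t)%N.
Proof. by rewrite /cross big_cons. Qed.

Lemma ninv_cat s t : ninv (s ++ t) = (ninv s + ninv t + cross s t)%N.
Proof.
elim: s => [|x s IH] /=; first by rewrite cross_nil addn0.
by rewrite IH count_cat cross_consl; lia.
Qed.

Lemma ninv_sorted s : sorted ltI s -> ninv s = 0%N.
Proof.
elim: s => [|x s IH] //= hs; rewrite IH ?(path_sorted hs) // addn0.
apply/eqP; rewrite -leqn0 leqNgt -has_count; apply/hasP => -[y ys /=].
have := order_path_min ltI_trans hs; move/allP/(_ y ys); rewrite /ltI => h1 h2.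
by have := ltn_trans h1 h2; rewrite ltnn.
Qed.

Lemma cross_perml s s' t : perm_eq s s' -> cross s t = cross s' t.
Proof. by move/permP=> h; rewrite /cross; apply: eq_bigr => b _; rewrite h. Qed.

Lemma cross_permr s t t' : perm_eq t t' -> cross s t = cross s t'.
Proof. by move=> h; rewrite /cross (perm_big _ h). Qed.

Definition fs A s := [seq y <- s | y \in A].
Definition fc A s := [seq y <- s | y \notin A].

Lemma sum_count_sorted (R : nmodType) (F : nat -> R) s : sorted ltI s ->
  (\sum_(x <- s) F (count (fun y : 'I_n => (y < x)%N) s) = \sum_(k < size s) F k)%R.
Proof.
elim: s F => [|y s IH] F hs; first by rewrite big_nil big_ord0.
rewrite big_cons big_ord_recl /=.
have hall := order_path_min ltI_trans hs.
congr (_ + _)%R.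
  congr F; rewrite ltnn add0n; apply/eqP; rewrite -leqn0 leqNgt -has_count; apply/hasP => -[z zs /=].
  move/allP/(_ z zs): hall; rewrite /ltI => h1 h2; by have := ltn_trans h1 h2; rewrite ltnn.
transitivity (\sum_(k < size s) F k.+1)%R; last by apply: eq_bigr => i _.
rewrite -(IH (fun k => F k.+1)) ?(path_sorted hs) //.
apply: eq_big_seq => x xs; move/allP/(_ x xs): hall; rewrite /ltI => ->; by rewrite add1n.
Qed.

Lemma perm_fc_del s A x : uniq s -> x \in A -> x \in s ->
  perm_eq (fc (A :\ x) s) (x :: fc A s).
Proof.
move=> us xA xs; apply: uniq_perm.
- exact: filter_uniq.
- by rewrite /= mem_filter xA /= filter_uniq.
move=> y; rewrite inE !mem_filter !inE; case: (eqVneq y x) => [->|yx] /=; first by rewrite xs.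
by [].
Qed.

Lemma perm_fs_del s A x : uniq s -> x \in A -> x \in s ->
  perm_eq (fs A s) (x :: fs (A :\ x) s).
Proof.
move=> us xA xs; apply: uniq_perm.
- exact: filter_uniq.
- by rewrite /= mem_filter !inE eqxx /= filter_uniq.
move=> y; rewrite inE !mem_filter !inE; case: (eqVneq y x) => [->|yx] /=; first by rewrite xA xs.
by [].
Qed.

Lemma fc_fc_del s A x : x \in A -> fc [set x] (fc (A :\ x) s) = fc A s.
Proof.
move=> xA; rewrite /fc -filter_predI; apply: eq_filter => y /=.
rewrite !inE; case: (eqVneq y x) => [->|] //=; by rewrite xA.
Qed.

Lemma exp_identity s A x (J : seq 'I_n) : sorted ltI s -> x \in A -> x \in s ->
  let M := A :\ x in
  let a := count (fun y : 'I_n => (y < x)%N) (fs A s) in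
  (ninv (fc M s ++ fs M s) + ninv (fc A s ++ [:: x]) + ninv (x :: fs M s ++ J))%N =
  (ninv (fc A s ++ fs A s) + a + a + ninv (fs A s ++ J))%N.
Proof.
move=> ss xA xs /=.
have us : uniq s := sorted_uniq ltI_trans ltI_irr ss.
have sf (B : {set 'I_n}) : sorted ltI (fs B s) by exact: (sorted_filter ltI_trans _ ss).
have sc (B : {set 'I_n}) : sorted ltI (fc B s) by exact: (sorted_filter ltI_trans _ ss).
have p1 := perm_fc_del us xA xs; have p2 := perm_fs_del us xA xs.
have ea : count (fun y : 'I_n => (y < x)%N) (fs A s) = count (fun y : 'I_n => (y < x)%N) (fs (A :\ x) s).
  by rewrite (permP p2) /= ltnn.
rewrite !ninv_cat (ninv_sorted (sf (A :\ x))) (ninv_sorted (sc (A :\ x)))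
  (ninv_sorted (sf A)) (ninv_sorted (sc A)) count_cat.
rewrite (cross_perml _ p1) cross_consl -ea.
rewrite (cross_permr _ p2) cross_consr.
rewrite [cross (fs A s) J](cross_perml _ p2) cross_consl.
rewrite /cross big_cons big_nil /=; lia.
Qed.

End Comb.
Local Open Scope ring_scope.

Section FA.
Variables (K : fieldType) (X : eqType).
Implicit Types (p : ncpoly K X) (G : seq X -> K).

Definition Phi G p : K := \sum_(t <- p) t.1 * G t.2.

Lemma eq_Phi G G' p : G =1 G' -> Phi G p = Phi G' p.
Proof. by move=> e; apply: eq_bigr => t _; rewrite e. Qed.

Lemma ncoefE p w : ncoef p w = Phi (fun v => (v == w)%:R) p.
Proof.
rewrite /ncoef /Phi big_mkcond /=; apply: eq_bigr => t _.
by case: eqP => _; rewrite ?mulr1 ?mulr0.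
Qed.

Lemma Phi_words G p (W : seq (seq X)) : uniq W -> (forall t, t \in p -> t.2 \in W) ->
  Phi G p = \sum_(v <- W) ncoef p v * G v.
Proof.
move=> uW hW.
have -> : \sum_(v <- W) ncoef p v * G v =
          \sum_(v <- W) \sum_(t <- p) (t.2 == v)%:R * t.1 * G v.
  apply: eq_bigr => v _; rewrite /ncoef big_mkcond mulr_suml /=.
  by apply: eq_bigr => t _; case: eqP; rewrite ?mul1r ?mul0r.
rewrite exchange_big /Phi; apply: eq_big_seq => t tp.
rewrite (bigD1_seq t.2) ?hW //= eqxx mul1r big1 ?addr0 // => v /negbTE nv.
by rewrite eq_sym nv mul0r mul0r.
Qed.

Lemma Phi_equiv G p p' : ncequiv p p' -> Phi G p = Phi G p'.
Proof.
move=> e; set W := undup [seq t.2 | t <- p ++ p'].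
have hW r : {subset r <= p ++ p'} -> forall t, t \in r -> t.2 \in W.
  by move=> s t tr; rewrite mem_undup; apply/mapP; exists t => //; apply: s.
rewrite (@Phi_words G p W) ?undup_uniq //; last by apply: hW => t tp; rewrite mem_cat tp.
rewrite (@Phi_words G p' W) ?undup_uniq //; last by apply: hW => t tp; rewrite mem_cat tp orbT.
by apply: eq_bigr => v _; rewrite e.
Qed.

Lemma equiv_Phi p p' : (forall G, Phi G p = Phi G p') -> ncequiv p p'.
Proof. by move=> h w; rewrite !ncoefE h. Qed.

Lemma Phi_add G p p' : Phi G (ncadd p p') = Phi G p + Phi G p'.
Proof. by rewrite /Phi /ncadd big_cat. Qed.

Lemma Phi_scale G c p : Phi G (ncscale c p) = c * Phi G p.
Proof. by rewrite /Phi big_map mulr_sumr; apply: eq_bigr => t _; rewrite mulrA. Qed.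

Lemma Phi_sub G p p' : Phi G (ncsub p p') = Phi G p - Phi G p'.
Proof. by rewrite /ncsub Phi_add Phi_scale mulN1r. Qed.

Lemma Phi_sum G (ps : seq (ncpoly K X)) : Phi G (ncsum ps) = \sum_(p <- ps) Phi G p.
Proof. by rewrite /Phi /ncsum big_flatten. Qed.

Lemma Phi_nil G : Phi G [::] = 0.
Proof. by rewrite /Phi big_nil. Qed.

Lemma Phi_mul G p p' : Phi G (ncmul p p') = Phi (fun v => Phi (fun u => G (v ++ u)) p') p.
Proof.
rewrite /Phi /ncmul big_allpairs_dep /=; apply: eq_bigr => a _.
by rewrite mulr_sumr; apply: eq_bigr => b _; rewrite mulrA.
Qed.

Lemma Phi_lin p (I : Type) (r : seq I) (F : I -> seq X -> K) :
  Phi (fun v => \sum_(i <- r) F i v) p = \sum_(i <- r) Phi (F i) p.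
Proof.
rewrite /Phi exchange_big /=; apply: eq_bigr => t _; by rewrite mulr_sumr.
Qed.

Lemma Phi_linD G p F1 F2 : Phi (fun v => F1 v + F2 v) p = Phi F1 p + Phi F2 p.
Proof. by rewrite /Phi -big_split; apply: eq_bigr => t _; rewrite mulrDr. Qed.

Lemma Phi_linZ p c F : Phi (fun v => c * F v) p = c * Phi F p.
Proof. by rewrite /Phi mulr_sumr; apply: eq_bigr => t _; rewrite mulrCA. Qed.

Lemma Phi_mul_assoc G a b c :
  Phi G (ncmul (ncmul a b) c) = Phi G (ncmul a (ncmul b c)).
Proof.
rewrite !Phi_mul; apply: eq_Phi => v; rewrite Phi_mul.
by apply: eq_Phi => u; apply: eq_Phi => w; rewrite catA.
Qed.

Lemma Phi_mul_sum G x (ps : seq (ncpoly K X)) :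
  Phi G (ncmul x (ncsum ps)) = \sum_(p <- ps) Phi G (ncmul x p).
Proof.
rewrite Phi_mul; under eq_Phi => v do rewrite Phi_sum.
rewrite Phi_lin; by apply: eq_bigr => p _; rewrite Phi_mul.
Qed.

Lemma Phi_sum_mul G y (ps : seq (ncpoly K X)) :
  Phi G (ncmul (ncsum ps) y) = \sum_(p <- ps) Phi G (ncmul p y).
Proof. by rewrite Phi_mul Phi_sum; apply: eq_bigr => p _; rewrite Phi_mul. Qed.

Lemma Phi_mulr_add G x p p' : Phi G (ncmul x (ncadd p p')) = Phi G (ncmul x p) + Phi G (ncmul x p').
Proof. by rewrite !Phi_mul; under eq_Phi => v do rewrite Phi_add; rewrite Phi_linD. Qed.

Lemma Phi_mulr_scale G x c p : Phi G (ncmul x (ncscale c p)) = c * Phi G (ncmul x p).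
Proof. by rewrite !Phi_mul; under eq_Phi => v do rewrite Phi_scale; rewrite Phi_linZ. Qed.

Lemma Phi_mulr_sub G x p p' : Phi G (ncmul x (ncsub p p')) = Phi G (ncmul x p) - Phi G (ncmul x p').
Proof. by rewrite /ncsub Phi_mulr_add Phi_mulr_scale mulN1r. Qed.

Lemma Phi_mull_scale G y c p : Phi G (ncmul (ncscale c p) y) = c * Phi G (ncmul p y).
Proof. by rewrite !Phi_mul Phi_scale. Qed.

Lemma Phi_mul_equiv G a a' b b' : ncequiv a a' -> ncequiv b b' ->
  Phi G (ncmul a b) = Phi G (ncmul a' b').
Proof.
move=> ea eb; rewrite !Phi_mul (Phi_equiv _ ea); apply: eq_Phi => v.
exact: Phi_equiv.
Qed.

Variable S : ncpoly K X -> Prop.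
Notation Id := (inIdeal S).

Definition one : ncpoly K X := [:: (1, [::])].

Lemma Phi_one_l G p : Phi G (ncmul one p) = Phi G p.
Proof. by rewrite Phi_mul /Phi big_seq1 /= mul1r. Qed.
Lemma Phi_one_r G p : Phi G (ncmul p one) = Phi G p.
Proof. by rewrite Phi_mul; apply: eq_Phi => v; rewrite /Phi big_seq1 /= mul1r cats0. Qed.

Lemma Id_equiv p p' : ncequiv p p' -> Id p -> Id p'.
Proof. by move=> e [l [h e']]; exists l; split=> // w; rewrite -e e'. Qed.

Lemma Id_equivP p p' : (forall G, Phi G p = Phi G p') -> Id p -> Id p'.
Proof. by move=> h; apply: Id_equiv; apply: equiv_Phi. Qed.

Lemma Id_gen s : S s -> Id s.
Proof.
move=> Ss; exists [:: (one, s, one)]; split.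
  by move=> t; rewrite inE => /eqP -> /=.
apply: equiv_Phi => G; rewrite /ncsum /= cats0 Phi_one_r Phi_one_l //.
Qed.

Lemma Id0 : Id [::].
Proof. by exists [::]; split. Qed.

Lemma Id_add p p' : Id p -> Id p' -> Id (ncadd p p').
Proof.
move=> [l [h e]] [l' [h' e']]; exists (l ++ l'); split.
  by move=> t; rewrite mem_cat => /orP [] ?; [apply: h | apply: h'].
by apply: equiv_Phi => G; rewrite Phi_add (Phi_equiv G e) (Phi_equiv G e') !Phi_sum map_cat big_cat.
Qed.

Lemma Id_scale c p : Id p -> Id (ncscale c p).
Proof.
move=> [l [h e]]; exists [seq (ncscale c t.1.1, t.1.2, t.2) | t <- l]; split.
  by move=> t /mapP [u ul ->] /=; apply: h.
apply: equiv_Phi => G; rewrite Phi_scale (Phi_equiv G e) !Phi_sum !big_map mulr_sumr.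
apply: eq_bigr => t _ /=; by rewrite !(Phi_mul G (ncmul _ _)) !Phi_mull_scale.
Qed.

Lemma Id_sub p p' : Id p -> Id p' -> Id (ncsub p p').
Proof. by move=> h h'; apply: Id_add => //; apply: Id_scale. Qed.

Lemma Id_mull x p : Id p -> Id (ncmul x p).
Proof.
move=> [l [h e]]; exists [seq (ncmul x t.1.1, t.1.2, t.2) | t <- l]; split.
  by move=> t /mapP [u ul ->] /=; apply: h.
apply: equiv_Phi => G.
rewrite (@Phi_mul_equiv G x x p _ (fun w => erefl) e) Phi_mul_sum Phi_sum !big_map.
apply: eq_bigr => t _ /=.
rewrite !Phi_mul_assoc; apply: Phi_mul_equiv => //.
by apply: equiv_Phi => G'; rewrite Phi_mul_assoc.
Qed.

Lemma Id_mulr y p : Id p -> Id (ncmul p y).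
Proof.
move=> [l [h e]]; exists [seq (t.1.1, t.1.2, ncmul t.2 y) | t <- l]; split.
  by move=> t /mapP [u ul ->] /=; apply: h.
apply: equiv_Phi => G.
rewrite (@Phi_mul_equiv G p _ y y e (fun w => erefl)) Phi_sum_mul Phi_sum !big_map.
by apply: eq_bigr => t _ /=; rewrite Phi_mul_assoc.
Qed.

Lemma Id_sum (ps : seq (ncpoly K X)) : (forall p, p \in ps -> Id p) -> Id (ncsum ps).
Proof.
elim: ps => [|p ps IH] h; first exact: Id0.
have -> : ncsum (p :: ps) = ncadd p (ncsum ps) by [].
apply: Id_add; first by apply: h; rewrite inE eqxx.
by apply: IH => r rp; apply: h; rewrite inE rp orbT.
Qed.

End FA.

Lemma Id_mono (K : fieldType) (X : eqType) (S S' : ncpoly K X -> Prop) p :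
  (forall s, S s -> inIdeal S' s) -> inIdeal S p -> inIdeal S' p.
Proof.
move=> hS [l [h e]].
apply: (Id_equiv (p := ncsum [seq ncmul (ncmul t.1.1 t.1.2) t.2 | t <- l])).
  by move=> w; rewrite e.
apply: Id_sum => r /mapP [t tl ->]; apply: Id_mulr; apply: Id_mull; apply: hS; exact: h.
Qed.

Section Reidx.
Variable n : nat.

Lemma map_mem_mask (T : eqType) (s : seq T) (m : seq bool) : uniq s -> size m = size s ->
  map (fun y => y \in mask m s) s = m.
Proof.
elim: s m => [|x s IH] [|b m] //= /andP [xs us] [sz].
congr cons.
  case: b => /=; first by rewrite inE eqxx.
  by apply/negP => /mem_mask; rewrite (negPf xs).
rewrite -[RHS](IH m us sz); apply/eq_in_map => y ys.
case: b => //=; rewrite inE; case: eqP => // yx; by move: xs; rewrite -yx ys.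
Qed.

Lemma mask_set_sum (R : nmodType) N (s : N.-tuple 'I_n) k (F : seq 'I_n -> seq 'I_n -> R) :
  uniq s ->
  (\sum_(m : N.-tuple bool | count id m == k) F (mask (map negb m) s) (mask m s) =
   \sum_(A : {set 'I_n} | (A \subset [set y in s]) && (#|A| == k)) F (fc A s) (fs A s))%R.
Proof.
move=> us.
pose h (A : {set 'I_n}) : N.-tuple bool := [tuple of map (fun y => y \in A) s].
pose h' (m : N.-tuple bool) : {set 'I_n} := [set y in mask m s].
rewrite (reindex_onto h h').
  apply: eq_big => A.
    rewrite /h /h' /= count_map.
    have e1 : [set y in mask [seq y \in A | y <- s] s] = [set y in s] :&: A.
      by apply/setP => y; rewrite -filter_mask !inE mem_filter andbC.
    rewrite e1.
    have cA : count (fun y => y \in A) s = #|[set y in s] :&: A|.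
      rewrite -size_filter -(card_uniqP (filter_uniq _ us)).
      by apply: eq_card => y; rewrite mem_filter !inE andbC.
    rewrite cA; apply/idP/idP.
      case/andP => /eqP c /eqP e; rewrite -e subsetIl /=.
      by rewrite c.
    case/andP => sub /eqP c.
    have e : [set y in s] :&: A = A by apply/setIidPr.
    by rewrite e c !eqxx.
  move=> _; rewrite /h /fc /fs !filter_mask /= -map_comp; congr F.
move=> m _; apply: val_inj; rewrite /h /h' /=.
under eq_map => y do rewrite inE.
by rewrite map_mem_mask // !size_tuple.
Qed.

Lemma set1_sum (R : nmodType) (x0 : 'I_n) (s : seq 'I_n) (F : {set 'I_n} -> R) :
  (\sum_(A : {set 'I_n} | (A \subset [set y in s]) && (#|A| == 1%N)) F A =
   \sum_(x | x \in s) F [set x])%R.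
Proof.
pose h' (A : {set 'I_n}) := odflt x0 [pick y in A].
rewrite (reindex_onto (fun x => [set x]) h').
  apply: eq_bigl => x; rewrite sub1set inE cards1 eqxx andbT /h'.
  case: pickP => [y|]; last by move/(_ x); rewrite inE eqxx.
  by rewrite inE => /eqP ->; rewrite eqxx andbT.
move=> A /andP [_ /cards1P [y ->]]; rewrite /h'.
case: pickP => [z|]; last by move/(_ y); rewrite inE eqxx.
by rewrite inE => /eqP ->.
Qed.

Lemma pair_sum (R : nmodType) (SI : {set 'I_n}) r (U : {set 'I_n} -> 'I_n -> R) : (0 < r)%N ->
  (\sum_(M : {set 'I_n} | (M \subset SI) && (#|M| == r.-1)) \sum_(x : 'I_n | (x \in SI) && (x \notin M)) U M x
  = \sum_(L : {set 'I_n} | (L \subset SI) && (#|L| == r)) \sum_(x in L) U (L :\ x) x)%R.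
Proof.
move=> r0.
rewrite !pair_big_dep /=.
rewrite (reindex_onto (fun p : {set 'I_n} * 'I_n => (p.1 :\ p.2, p.2))
                     (fun p => (p.2 |: p.1, p.2))) /=.
  apply: eq_big => [[L x]|[L x] _] //=.
  rewrite xpair_eqE eqxx andbT !inE eqxx /=.
  apply/idP/idP.
    case/andP => /andP [/andP [sub /eqP c] xS] /eqP e.
    have xL : x \in L by rewrite -e !inE eqxx.
    have xS' : x \in SI by case/andP: xS.
    rewrite xL andbT; apply/andP; split.
      by rewrite -e subUset sub1set xS' sub.
    by rewrite (cardsD1 x L) xL c; move: r0; case: (r) => //.
  case/andP => /andP [sub /eqP c] xL.
  rewrite (subset_trans (subsetDl L [set x]) sub) /= (subsetP sub x xL) /=.
  rewrite setD1K // eqxx andbT.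
  by move: c; rewrite (cardsD1 x L) xL add1n => <-; rewrite /= eqxx.
move=> [M x] /andP [_ /andP [_ xM]] /=.
by rewrite setU1K.
Qed.

End Reidx.

Section Main.
Variables (K : fieldType) (q : K) (n d : nat).
Local Notation F := (fgen K d).
Local Notation S1 := (@rels_one K q n d).
Local Notation Id1 := (inIdeal S1).
Definition leI := fun a b : 'I_n => (a <= b)%N.

Lemma mqD a b : mqinv q (a + b) = mqinv q a * mqinv q b.
Proof. by rewrite /mqinv exprD invfM. Qed.

Definition eps (s : seq 'I_n) : K := if uniq s then mqinv q (ninv s) else 0.
Definition gs (s : seq 'I_n) : ncpoly K (gens n d) := ncscale (eps s) (F (sort leI s)).

Lemma F_nil (s : seq 'I_n) : size s != d -> F s = [::].
Proof. by move=> hs; rewrite /fgen insubN. Qed.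

Lemma alt_Id (s : seq 'I_n) : Id1 (ncsub (F s) (gs s)).
Proof.
case: (eqVneq (size s) d) => hs; last first.
  by rewrite /gs !F_nil ?size_sort //; exact: Id0.
pose t : gens n d := Tuple (introT eqP hs).
have ht : Id1 (arel q t) by apply: Id_gen; left; exists t.
case us : (uniq s).
  by move: ht; rewrite /arel /= us /gs /eps us.
move: ht; rewrite /arel /= us; apply: Id_equivP => G.
by rewrite Phi_sub /gs /eps us Phi_scale mul0r subr0.
Qed.

Lemma Phi_yrel G r (I J : seq 'I_n) : size I = (d + r)%N -> uniq I ->
  Phi G (yrel q d r I J) =
  \sum_(A : {set 'I_n} | (A \subset [set y in I]) && (#|A| == r))
     mqinv q (ninv (fc A I ++ fs A I)) * Phi G (ncmul (F (fc A I)) (F (fs A I ++ J))).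
Proof.
move=> hI uI; pose tI : (d + r).-tuple 'I_n := Tuple (introT eqP hI).
rewrite /yrel Phi_sum !big_map big_enum_cond /=.
under eq_bigr => m _ do rewrite Phi_scale.
rewrite -[I]/(val tI).
rewrite -(@mask_set_sum n _ _ tI r (fun u v => mqinv q (ninv (u ++ v)) * Phi G (ncmul (F u) (F (v ++ J)))) uI).
by apply: eq_big => // m; rewrite andbT.
Qed.

Lemma Phi_yrel1 G (x0 : 'I_n) (I J : seq 'I_n) : size I = (d + 1)%N -> uniq I ->
  Phi G (yrel q d 1 I J) =
  \sum_(x | x \in I)
     mqinv q (ninv (fc [set x] I ++ [:: x])) * Phi G (ncmul (F (fc [set x] I)) (F (x :: J))).
Proof.
move=> hI uI; rewrite Phi_yrel // (@set1_sum n _ x0 I (fun A =>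
  mqinv q (ninv (fc A I ++ fs A I)) * Phi G (ncmul (F (fc A I)) (F (fs A I ++ J))))).
apply: eq_bigr => x xI.
have -> : fs [set x] I = [:: x].
  by rewrite /fs -(filter_pred1_uniq uI xI); apply: eq_filter => y; rewrite inE.
by [].
Qed.

Lemma leI_total : total leI. Proof. by move=> a b; apply: leq_total. Qed.
Lemma leI_trans : transitive leI. Proof. by move=> a b c; apply: leq_trans. Qed.
Lemma leI_anti : antisymmetric leI.
Proof. by move=> a b h; apply: val_inj; apply/eqP; rewrite eqn_leq. Qed.

Definition Cq (r : nat) : K := \sum_(k < r) mqinv q (k + k).

Lemma Cq_neq0 r : (0 < r)%N -> (forall k : nat, (0 < k)%N -> q ^+ k != 1) -> Cq r != 0.
Proof.
move=> r0 hq.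
set y := (q ^+ 2)^-1.
have e k : mqinv q (k + k) = y ^+ k.
  by rewrite /mqinv addnn -mul2n exprM sqrrN -exprVn.
have -> : Cq r = \sum_(k < r) y ^+ k by apply: eq_bigr => k _; rewrite e.
apply/eqP => h.
have : y ^+ r - 1 = 0 by rewrite subrX1 h mulr0.
move/eqP; rewrite subr_eq0 /y exprVn -exprM => /eqP h1.
have : q ^+ (2 * r) = 1 by rewrite -[q ^+ _]invrK h1 invr1.
by move/eqP; apply/negP; apply: hq; rewrite muln_gt0.
Qed.

Lemma core (b : seq 'I_n -> seq 'I_n -> K) (I J : seq 'I_n) r :
  sorted (@ltI n) I -> (0 < r)%N ->
  Cq r * \sum_(L : {set 'I_n} | (L \subset [set y in I]) && (#|L| == r))
      mqinv q (ninv (fc L I ++ fs L I)) * (eps (fs L I ++ J) * b (fc L I) (sort leI (fs L I ++ J)))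
  = \sum_(M : {set 'I_n} | (M \subset [set y in I]) && (#|M| == r.-1))
      mqinv q (ninv (fc M I ++ fs M I)) *
      \sum_(x | x \in fc M I) mqinv q (ninv (fc [set x] (fc M I) ++ [:: x])) *
         (eps (x :: fs M I ++ J) * b (fc [set x] (fc M I)) (sort leI (x :: fs M I ++ J))).
Proof.
move=> sI r0.
have uI : uniq I := sorted_uniq (@ltI_trans n) (@ltI_irr n) sI.
apply: esym.
under eq_bigr => M _ do rewrite mulr_sumr.
have fcP (M : {set 'I_n}) : (fun x => x \in fc M I) =1 (fun x => (x \in [set y in I]) && (x \notin M)).
  by move=> x; rewrite mem_filter inE andbC.
under eq_bigr => M _ do rewrite (eq_bigl _ _ (fcP M)).
rewrite (@pair_sum n _ [set y in I] r (fun M x => mqinv q (ninv (fc M I ++ fs M I)) *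
   (mqinv q (ninv (fc [set x] (fc M I) ++ [:: x])) *
    (eps (x :: fs M I ++ J) * b (fc [set x] (fc M I)) (sort leI (x :: fs M I ++ J)))))) //.
rewrite mulr_sumr; apply: esym; apply: eq_bigr => L /andP [sub /eqP cL].
set T := mqinv q _ * _.
have xI x : x \in L -> x \in I by move=> xL; have := subsetP sub x xL; rewrite inE.
have step x : x \in L -> mqinv q (ninv (fc (L :\ x) I ++ fs (L :\ x) I)) *
   (mqinv q (ninv (fc [set x] (fc (L :\ x) I) ++ [:: x])) *
    (eps (x :: fs (L :\ x) I ++ J) * b (fc [set x] (fc (L :\ x) I)) (sort leI (x :: fs (L :\ x) I ++ J))))
   = mqinv q (count (fun y : 'I_n => (y < x)%N) (fs L I) + count (fun y : 'I_n => (y < x)%N) (fs L I)) * T.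
  move=> xL; rewrite fc_fc_del //.
  have p2 := perm_fs_del uI xL (xI x xL).
  have pW : perm_eq (fs L I ++ J) (x :: fs (L :\ x) I ++ J) by rewrite -cat_cons perm_cat2r.
  have -> : sort leI (x :: fs (L :\ x) I ++ J) = sort leI (fs L I ++ J).
    by apply/esym/perm_sortP => //; [apply: leI_total | apply: leI_trans | apply: leI_anti].
  rewrite /T /eps -(perm_uniq pW).
  case: (uniq (fs L I ++ J)); last by rewrite !mul0r !mulr0.
  rewrite !mulrA -!mqD; congr (mqinv q _ * _).
  have := exp_identity J sI xL (xI x xL); rewrite /=; lia.
rewrite (eq_bigr _ step) -mulr_suml; congr (_ * _).
rewrite /Cq; apply: esym; rewrite -big_enum /=.
have pL : perm_eq (enum L) (fs L I).
  apply: uniq_perm; [exact: enum_uniq | exact: filter_uniq |].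
  by move=> y; rewrite mem_enum mem_filter andb_idr // => /xI.
rewrite (perm_big _ pL) /=.
rewrite (sum_count_sorted (fun k => mqinv q (k + k))); last first.
  exact: (sorted_filter (@ltI_trans n) _ sI).
have -> : size (fs L I) = r.
  rewrite -cL -(card_uniqP (filter_uniq _ uI)); apply: eq_card => y.
  by rewrite mem_filter andb_idr // => /xI.
by [].
Qed.

End Main.

Lemma size_fs n (A : {set 'I_n}) (s : seq 'I_n) : uniq s -> A \subset [set y in s] ->
  size (fs A s) = #|A|.
Proof.
move=> us sub; rewrite -(card_uniqP (filter_uniq _ us)); apply: eq_card => y.
rewrite mem_filter andb_idr // => yA; by have := subsetP sub y yA; rewrite inE.
Qed.

Lemma size_fc n (A : {set 'I_n}) (s : seq 'I_n) : uniq s -> A \subset [set y in s] ->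
  size (fc A s) = (size s - #|A|)%N.
Proof.
move=> us sub; rewrite -(size_fs us sub) /fc /fs !size_filter.
by rewrite -(count_predC (fun y => y \in A) s) addKn.
Qed.

Lemma sum_enumP (R : nmodType) (T : finType) (P : pred T) (f : T -> R) :
  (\sum_(i <- enum P) f i = \sum_(i | P i) f i)%R.
Proof. by rewrite big_enum. Qed.

Section Main2.
Variables (K : fieldType) (q : K) (n d : nat).
Local Notation F := (fgen K d).
Local Notation S1 := (@rels_one K q n d).
Local Notation Id1 := (inIdeal S1).

Lemma yrel_Id r (I J : seq 'I_n) : (d < n)%N -> (forall k : nat, (0 < k)%N -> q ^+ k != 1) ->
  yrel_ok d r I J -> Id1 (yrel q d r I J).
Proof.
move=> hdn hq [/andP [r1 rd] hI sI hJ uJ].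
have x0 : 'I_n := Ordinal (leq_ltn_trans (leq0n d) hdn).
have uI : uniq I := sorted_uniq (@ltI_trans n) (@ltI_irr n) sI.
pose SI := [set y in I].
pose P0 (M : {set 'I_n}) := (M \subset SI) && (#|M| == r.-1).
pose PM (M : {set 'I_n}) := P0 M && uniq (fs M I ++ J).
pose P (L : {set 'I_n}) := (L \subset SI) && (#|L| == r).
pose w (L : {set 'I_n}) := mqinv q (ninv (fc L I ++ fs L I)).
pose w' (M : {set 'I_n}) (x : 'I_n) := mqinv q (ninv (fc [set x] (fc M I) ++ [:: x])).
pose W (M : {set 'I_n}) (x : 'I_n) := x :: fs M I ++ J.
pose Z1 := ncsum [seq ncscale (w L) (ncmul (F (fc L I)) (ncsub (F (fs L I ++ J)) (gs q d (fs L I ++ J))))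
                 | L <- enum P].
pose E := ncsum [seq ncscale (w M) (yrel q d 1 (fc M I) (fs M I ++ J)) | M <- enum PM].
pose Z2 := ncsum [seq ncscale (w M) (ncsum [seq ncscale (w' M x)
                   (ncmul (F (fc [set x] (fc M I))) (ncsub (F (W M x)) (gs q d (W M x))))
                   | x <- enum (fun x => x \in fc M I)]) | M <- enum PM].
have szfc M : P0 M -> size (fc M I) = (d + 1)%N.
  case/andP => sub /eqP c; rewrite size_fc // hI c; move: r1; case: (r) => //= r' _; lia.
have ufc M : uniq (fc M I) by apply: filter_uniq.
have IZ1 : Id1 Z1.
  apply: Id_sum => p /mapP [L _ ->]; apply: Id_scale; apply: Id_mull; exact: alt_Id.
have IZ2 : Id1 Z2.
  apply: Id_sum => p /mapP [M _ ->]; apply: Id_scale; apply: Id_sum => p' /mapP [x _ ->].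
  apply: Id_scale; apply: Id_mull; exact: alt_Id.
have IE : Id1 E.
  apply: Id_sum => p /mapP [M]; rewrite mem_enum => /andP [hP0 uM] ->.
  apply: Id_scale; apply: Id_gen; right; exists (fc M I), (fs M I ++ J); split => //.
  split => //.
  - by apply/andP; split => //; apply: leq_trans rd.
  - by apply: szfc.
  - exact: (sorted_filter (@ltI_trans n) _ sI).
  - case/andP: hP0 => sub /eqP c; rewrite size_cat size_fs // c hJ; move: r1 rd; case: (r) => //= r' _; lia.
have C0 := Cq_neq0 r1 hq.
apply: (Id_equivP (p := ncadd Z1 (ncscale (Cq q r)^-1 (ncsub E Z2)))); last first.
  by apply: Id_add => //; apply: Id_scale; apply: Id_sub.
move=> G.
pose b (A B : seq 'I_n) := Phi G (ncmul (F A) (F B)).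
pose SL := \sum_(L | P L) w L * (eps q (fs L I ++ J) * b (fc L I) (sort (@leI n) (fs L I ++ J))).
pose SR := \sum_(M | P0 M) w M * \sum_(x | x \in fc M I) w' M x *
              (eps q (W M x) * b (fc [set x] (fc M I)) (sort (@leI n) (W M x))).
have hcore : Cq q r * SL = SR by apply: core.
have eY : Phi G (yrel q d r I J) = \sum_(L | P L) w L * b (fc L I) (fs L I ++ J).
  by rewrite Phi_yrel.
have eZ1 : Phi G Z1 = Phi G (yrel q d r I J) - SL.
  rewrite eY /SL -sumrB Phi_sum big_map sum_enumP; apply: eq_bigr => L _.
  by rewrite Phi_scale Phi_mulr_sub /gs Phi_mulr_scale -mulrBr.
have eEZ : Phi G E - Phi G Z2 = SR.
  rewrite /SR /E /Z2 !Phi_sum !big_map !sum_enumP -sumrB.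
  rewrite (bigID (fun M => uniq (fs M I ++ J)) P0) /=.
  rewrite [X in _ = _ + X]big1 ?addr0; last first.
    move=> M /andP [_ nu]; rewrite big1 ?mulr0 // => x _.
    by rewrite /eps /W /= (negPf nu) andbF mul0r mulr0.
  apply: eq_bigr => M /andP [hP0 uM].
  rewrite !Phi_scale -mulrBr Phi_yrel1 ?szfc //; congr (_ * _).
  rewrite Phi_sum big_map sum_enumP -sumrB; apply: eq_bigr => x _.
  by rewrite Phi_scale Phi_mulr_sub /gs Phi_mulr_scale -mulrBr opprB addrC subrK.
by rewrite Phi_add Phi_scale Phi_sub eEZ -hcore mulKf // eZ1 subrK.
Qed.

End Main2.

Theorem mainTheorem2 (K : fieldType) (q : K) (n d : nat)
  (hchar : [pchar K] =i pred0) (hdn : (d < n)%N)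
  (hq0 : q != 0) (hq : forall k : nat, (0 < k)%N -> q ^+ k != 1) :
  forall p : ncpoly K (gens n d),
    inIdeal (@rels_all K q n d) p <-> inIdeal (@rels_one K q n d) p.
Proof.
move=> p; split; apply: Id_mono => s.
  case=> [[I ->]|[r [I [J [ok ->]]]]]; first by apply: Id_gen; left; exists I.
  exact: yrel_Id.
case=> [[I ->]|[I [J [ok ->]]]]; apply: Id_gen; first by left; exists I.
by right; exists 1%N, I, J.
Qed.
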